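(* Let $\mathfrak g$ be a finite-dimensional Lie algebra over a field $k$ of characteristic zero. If $\mathfrak g$ admits an LR-structure, then $\mathfrak g$ also admits a complete LR-structure.
   Context: An LR-algebra is a vector space $A$ with a bilinear product $\cdot$ satisfying $x\cdot(y\cdot z)=y\cdot(x\cdot z)$ and $(x\cdot y)\cdot z=(x\cdot z)\cdot y$ for all $x,y,z\in A$. An LR-structure on a Lie algebra $\mathfrak g$ is an LR-algebra product on the underlying vector space of $\mathfrak g$ such that $x\cdot y-y\cdot x=[x,y]$ for all $x,y$. An LR-structure is complete if all right multiplications $R(x)\colon y\mapsto y\cdot x$ are nilpotent. *)

(* Defs.v *)
From HB Require Import structures.
From mathcomp Require Import all_boot all_order all_algebra.
Set Implicit Arguments. Unset Strict Implicit. Unset Printing Implicit Defensive.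
Import GRing.Theory.
Local Open Scope ring_scope.

Definition bilin_map (F : fieldType) (n : nat)
    (f : 'rV[F]_n -> 'rV[F]_n -> 'rV[F]_n) : Prop :=
  (forall (a : F) x y z, f (a *: x + y) z = a *: f x z + f y z) /\
  (forall (a : F) x y z, f z (a *: x + y) = a *: f z x + f z y).

Definition is_lie_bracket (F : fieldType) (n : nat)
    (br : 'rV[F]_n -> 'rV[F]_n -> 'rV[F]_n) : Prop :=
  [/\ bilin_map br,
      (forall x, br x x = 0) &
      (forall x y z, br x (br y z) + br y (br z x) + br z (br x y) = 0)].

Definition is_LR_algebra (F : fieldType) (n : nat)
    (p : 'rV[F]_n -> 'rV[F]_n -> 'rV[F]_n) : Prop :=
  [/\ bilin_map p,
      (forall x y z, p x (p y z) = p y (p x z)) &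
      (forall x y z, p (p x y) z = p (p x z) y)].

Definition is_LR_structure (F : fieldType) (n : nat)
    (br p : 'rV[F]_n -> 'rV[F]_n -> 'rV[F]_n) : Prop :=
  is_LR_algebra p /\ (forall x y, p x y - p y x = br x y).

Definition right_mul (F : fieldType) (n : nat)
    (p : 'rV[F]_n -> 'rV[F]_n -> 'rV[F]_n) (x : 'rV[F]_n) : 'rV[F]_n -> 'rV[F]_n :=
  fun y => p y x.

Definition complete_product (F : fieldType) (n : nat)
    (p : 'rV[F]_n -> 'rV[F]_n -> 'rV[F]_n) : Prop :=
  forall x, exists m : nat, forall y, iter m (right_mul p x) y = 0.

(* Main.v *)
Require Import Defs.
From HB Require Import structures.
From mathcomp Require Import all_boot all_order all_algebra.
Set Implicit Arguments. Unset Strict Implicit. Unset Printing Implicit Defensive.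
Import GRing.Theory.
Local Open Scope ring_scope.

Lemma nil2 (F : fieldType) (m : nat) (Q X Y : 'M[F]_m.+1) a b :
  X * Y = Y * X -> Q * X = X * Q -> Q * Y = Y * Q ->
  Q * X ^+ a = 0 -> Q * Y ^+ b = 0 -> Q * (X + Y) ^+ (a + b) = 0.
Proof.
move=> XY QX QY Ha Hb.
rewrite exprDn_comm // mulr_sumr big1 // => i _.
rewrite mulrnAr mulrA.
case: (leqP b i) => hi.
  have cQX : GRing.comm Q (X ^+ (a + b - i)) by apply: commrX.
  have -> : Y ^+ i = Y ^+ b * Y ^+ (i - b) by rewrite -exprD subnKC.
  by rewrite cQX -!mulrA [Q * (_ * _)]mulrA Hb mul0r mulr0 mul0rn.
have hk : (a <= a + b - i)%N by rewrite -addnBA ?leq_addr // ltnW.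
have -> : X ^+ (a + b - i) = X ^+ a * X ^+ (a + b - i - a) by rewrite -exprD subnKC.
by rewrite mulrA Ha !mul0r mul0rn.
Qed.

Lemma nilS (F : fieldType) (m : nat) (I : Type) (s : seq I) (G : I -> 'M[F]_m.+1) (Q : 'M[F]_m.+1) :
  (forall i j, G i * G j = G j * G i) -> (forall i, Q * G i = G i * Q) ->
  (forall i, exists k, Q * G i ^+ k = 0) -> exists k, Q * (\sum_(i <- s) G i) ^+ k = 0.
Proof.
move=> GC QG GN; elim: s => [|a s [k IH]].
  by exists 1%N; rewrite big_nil expr1 mulr0.
have [ka Ha] := GN a.
exists (ka + k)%N; rewrite big_cons; apply: nil2 => //.
- by apply: commr_sum => i _; apply: GC.
- by apply: commr_sum => i _; apply: QG.
Qed.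

Section LR.
Variable F : fieldType.
Variable n' : nat.
Local Notation n := n'.+1.
Local Notation V := 'rV[F]_n.
Local Notation M := 'M[F]_n.
Variable p : V -> V -> V.
Hypothesis Hlin : bilin_map p.
Hypothesis H1 : forall x y z, p x (p y z) = p y (p x z).
Hypothesis H2 : forall x y z, p (p x y) z = p (p x z) y.

Lemma pDZ1 a x y z : p (a *: x + y) z = a *: p x z + p y z.
Proof. by case: Hlin. Qed.
Lemma pDZ2 a x y z : p z (a *: x + y) = a *: p z x + p z y.
Proof. by case: Hlin. Qed.
Lemma pD1 x y z : p (x + y) z = p x z + p y z.
Proof. by rewrite -[x]scale1r pDZ1 !scale1r. Qed.
Lemma pD2 x y z : p z (x + y) = p z x + p z y.
Proof. by rewrite -[x]scale1r pDZ2 !scale1r. Qed.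
Lemma p01 z : p 0 z = 0.
Proof. have h : p 0 z + p 0 z = p 0 z + 0 by rewrite addr0 -pD1 addr0. exact: addrI h. Qed.
Lemma p02 z : p z 0 = 0.
Proof. have h : p z 0 + p z 0 = p z 0 + 0 by rewrite addr0 -pD2 addr0. exact: addrI h. Qed.
Lemma pZ1 a x z : p (a *: x) z = a *: p x z.
Proof. by rewrite -[a *: x]addr0 pDZ1 p01 addr0. Qed.
Lemma pZ2 a x z : p z (a *: x) = a *: p z x.
Proof. by rewrite -[a *: x]addr0 pDZ2 p02 addr0. Qed.
Lemma pN1 x z : p (- x) z = - p x z.
Proof. by rewrite -scaleN1r pZ1 scaleN1r. Qed.
Lemma pN2 x z : p z (- x) = - p z x.
Proof. by rewrite -scaleN1r pZ2 scaleN1r. Qed.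
Lemma pB1 x y z : p (x - y) z = p x z - p y z.
Proof. by rewrite pD1 pN1. Qed.
Lemma pB2 x y z : p z (x - y) = p z x - p z y.
Proof. by rewrite pD2 pN2. Qed.
Lemma pS1 (I : Type) (r : seq I) (f : I -> V) z :
  p (\sum_(i <- r) f i) z = \sum_(i <- r) p (f i) z.
Proof. by apply: (big_morph (fun x => p x z) (fun x y => pD1 x y z) (p01 z)). Qed.
Lemma pS2 (I : Type) (r : seq I) (f : I -> V) z :
  p z (\sum_(i <- r) f i) = \sum_(i <- r) p z (f i).
Proof. by apply: (big_morph (fun x => p z x) (fun x y => pD2 x y z) (p02 z)). Qed.

Definition Rm (y : V) : M := \matrix_(i, j) p ('e_i) y 0 j.

Lemma RmE x y : x *m Rm y = p x y.
Proof.
rewrite {2}(row_sum_delta x) pS1; apply/rowP => j.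
rewrite !mxE summxE; apply: eq_bigr => i _.
by rewrite pZ1 !mxE.
Qed.

Lemma mx_ext (A B : M) : (forall x : V, x *m A = x *m B) -> A = B.
Proof. by move=> H; apply/row_matrixP => i; rewrite !rowE. Qed.

Lemma RmC y z : Rm y * Rm z = Rm z * Rm y.
Proof. apply: mx_ext => x; rewrite -mulmxE !mulmxA !RmE. exact: H2. Qed.

Definition T (j : 'I_n) := Rm 'e_j.

Lemma Rm_sum y : Rm y = \sum_(j < n) y 0 j *: T j.
Proof.
apply: mx_ext => x; rewrite RmE {1}(row_sum_delta y) pS2 mulmx_sumr.
by apply: eq_bigr => j _; rewrite pZ2 -scalemxAr RmE.
Qed.

Lemma ZZ x w y z : p z (p (p x w) y) = p (p z (p x w)) y.
Proof.
transitivity (p (p x y) (p z w)); first by rewrite H2 H1.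
by rewrite [p z (p x w)]H1 H2.
Qed.

Lemma KK a b c d : p (p a b) (p c d) = p (p c d) (p a b).
Proof. by rewrite H1 ZZ H2. Qed.


Variables (Pj Qj : 'I_n -> M) (kj : 'I_n -> nat).
Hypothesis HPI : forall j, Pj j * Pj j = Pj j.
Hypothesis HPC : forall j S, T j * S = S * T j -> Pj j * S = S * Pj j.
Hypothesis HPN : forall j, Pj j * T j ^+ kj j = 0.
Hypothesis HPQ : forall j, 1 - Pj j = Qj j * T j.
Hypothesis HQP : forall j, Qj j * Pj j = 0.

Lemma TC i j : T i * T j = T j * T i.
Proof. exact: RmC. Qed.

Lemma PjC i j : Pj i * Pj j = Pj j * Pj i.
Proof. by apply: HPC; symmetry; apply: HPC; apply: TC. Qed.

Lemma PjT i j : Pj i * T j = T j * Pj i.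
Proof. by apply: HPC; apply: TC. Qed.

Lemma PjR i y : Pj i * Rm y = Rm y * Pj i.
Proof. by apply: HPC; apply: RmC. Qed.

Definition Pr (s : seq 'I_n) : M := \prod_(i <- s) Pj i.

Lemma PrC s S : (forall j, T j * S = S * T j) -> Pr s * S = S * Pr s.
Proof.
move=> HS; elim: s => [|a s IH]; first by rewrite /Pr big_nil mul1r mulr1.
by rewrite /Pr big_cons -mulrA -/(Pr s) IH !mulrA HPC.
Qed.

Lemma PrR s y : Pr s * Rm y = Rm y * Pr s.
Proof. by apply: PrC => j; apply: RmC. Qed.

Lemma PrPj s j : Pr s * Pj j = Pj j * Pr s.
Proof. by apply: PrC => i; symmetry; apply: PjT. Qed.

Lemma PrI s : Pr s * Pr s = Pr s.
Proof.
elim: s => [|a s IH]; first by rewrite /Pr big_nil mul1r.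
rewrite /Pr big_cons -/(Pr s) -mulrA [Pr s * _]mulrA PrPj -mulrA IH mulrA HPI //.
Qed.

Lemma PrIn s j : j \in s -> Pr s * Pj j = Pr s.
Proof.
elim: s => [//|a s IH]; rewrite inE => /orP [/eqP -> | Hj].
  by rewrite /Pr big_cons -/(Pr s) -mulrA PrPj mulrA HPI.
by rewrite /Pr big_cons -/(Pr s) -mulrA IH.
Qed.

Lemma PrDec s (w : V) : exists r : seq ('I_n * V),
  w *m (1 - Pr s) = \sum_(t <- r) t.2 *m T t.1 /\ (forall t, t \in r -> t.2 *m Pj t.1 = 0).
Proof.
elim: s w => [|a s IH] w.
  by exists [::]; rewrite /Pr big_nil subrr mulmx0 big_nil; split.
have [r [Hr1 Hr2]] := IH (w *m Pj a).
exists ((a, w *m Qj a) :: r); split.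
  rewrite big_cons /= /Pr big_cons -/(Pr s) -Hr1.
  have -> : 1 - Pj a * Pr s = (1 - Pj a) + Pj a * (1 - Pr s).
    by rewrite mulrBr mulr1 addrA subrK.
  by rewrite mulmxDr HPQ -!mulmxE !mulmxA.
move=> t; rewrite inE => /orP [/eqP -> /= | Ht]; last exact: Hr2.
by rewrite -mulmxA mulmxE HQP mulmx0.
Qed.


Local Notation P := (Pr (enum 'I_n)).

Lemma PP : P * P = P. Proof. exact: PrI. Qed.
Lemma PRm y : P *m Rm y = Rm y *m P. Proof. by rewrite mulmxE PrR. Qed.
Lemma PjRm j y : Pj j *m Rm y = Rm y *m Pj j. Proof. by rewrite mulmxE PjR. Qed.

Lemma Fp0 x y : p x y *m P = p (x *m P) y.
Proof. by rewrite -!RmE -mulmxA -PRm mulmxA. Qed.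

Lemma L6 x w : x *m P = x -> w *m P = 0 -> p x w = 0.
Proof.
move=> Hx Hw.
have ew : w = w *m (1 - P) by rewrite mulmxBr mulmx1 Hw subr0.
have [r [Hr1 Hr2]] := PrDec (enum 'I_n) w.
rewrite ew Hr1 pS2 big1_seq // => t /andP [_ Ht].
rewrite /T RmE H1.
set z := p t.2 (p x 'e_t.1).
have zP : z *m P = z by rewrite /z -H1 Fp0 Hx.
have zPj : z *m Pj t.1 = 0.
  by rewrite /z -RmE -mulmxA -PjRm mulmxA Hr2 // mul0mx.
have : z = z *m P *m Pj t.1 by rewrite -mulmxA mulmxE PrIn ?mem_enum // -mulmxE zP.
by rewrite zP zPj.
Qed.

Lemma L7 x y : x *m P = 0 -> y *m P = 0 -> p x y = p y x.
Proof.
move=> Hx Hy.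
have ex : x = x *m (1 - P) by rewrite mulmxBr mulmx1 Hx subr0.
have ey : y = y *m (1 - P) by rewrite mulmxBr mulmx1 Hy subr0.
have [r [Hr1 _]] := PrDec (enum 'I_n) x.
have [r' [Hr1' _]] := PrDec (enum 'I_n) y.
rewrite ex ey Hr1 Hr1' pS1.
under eq_bigr do rewrite pS2.
rewrite pS1.
under [RHS]eq_bigr do rewrite pS2.
rewrite exchange_big /=.
apply: eq_bigr => t _; apply: eq_bigr => s _.
by rewrite /T !RmE KK.
Qed.


Lemma L5 y : exists k, P * Rm y ^+ k = 0.
Proof.
rewrite Rm_sum; apply: (@nilS F n').
- by move=> i j; rewrite -!scalerAl -!scalerAr TC !scalerA mulrC.
- move=> i; rewrite -scalerAl -scalerAr; congr (_ *: _).
  by apply: PrC => j; apply: TC.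
- move=> i; exists (kj i).
  rewrite exprZn -scalerAr -(@PrIn (enum 'I_n) i) ?mem_enum // -mulrA HPN mulr0 scaler0 //.
Qed.

Definition pp (x y : V) : V := p (x *m P) (y *m P) - p (y - y *m P) (x *m P).

Lemma LPz (y : V) : (y - y *m P) *m P = 0.
Proof. by rewrite mulmxBl -mulmxA mulmxE PP subrr. Qed.
Lemma LPP (x : V) : x *m P *m P = x *m P.
Proof. by rewrite -mulmxA mulmxE PP. Qed.

Lemma ppP x y : pp x y *m P = p (x *m P) (y *m P).
Proof. by rewrite /pp mulmxBl !Fp0 LPz p01 subr0 LPP. Qed.

Variable br : V -> V -> V.
Hypothesis Hbr : forall x y, p x y - p y x = br x y.

Lemma S3 a b : p a b = p (a *m P) (b *m P) + p (a - a *m P) (b *m P) + p (a - a *m P) (b - b *m P).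
Proof.
have ea : a = a *m P + (a - a *m P) by rewrite addrC subrK.
have eb : b = b *m P + (b - b *m P) by rewrite addrC subrK.
have h0 : p (a *m P) (b - b *m P) = 0 by apply: L6; rewrite ?LPP ?LPz.
move: h0 ea eb; set a1 := a - a *m P; set b1 := b - b *m P => h0 ea eb.
by rewrite {1}ea {1}eb pD1 (pD2 _ _ (a *m P)) (pD2 _ _ a1) h0 addr0 addrA.
Qed.

Lemma grp (A B C D E : V) : A - B - (C - D) = A + D + E - (C + B + E).
Proof.
rewrite [C + B + E]addrC addrKA !opprD opprK !addrA.
rewrite [A - B - C + D]addrAC [A - B + D]addrAC.
by rewrite [A + D - C - B]addrAC.
Qed.

Lemma pp_in x y z : pp x (pp y z) =
  p (x *m P) (p (y *m P) (z *m P)) + p (p (z - z *m P) (y *m P)) (x *m P).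
Proof.
rewrite {1}/pp ppP; congr (_ + _); rewrite -pN1; congr (p _ _).
by rewrite /pp opprB subKr.
Qed.

Lemma pp_out x y z : pp (pp x y) z = p (p (x *m P) (y *m P)) (z *m P).
Proof.
rewrite {1}/pp ppP.
have -> : p (z - z *m P) (p (x *m P) (y *m P)) = 0.
  rewrite H1; apply: L6; first by rewrite LPP.
  by rewrite Fp0 LPz p01.
by rewrite subr0.
Qed.

Lemma final : exists q, is_LR_structure br q /\ complete_product q.
Proof.
exists pp; split; [split; [split|] | ].
- split=> a x y z; rewrite /pp mulmxDl -scalemxAl.
    by rewrite pDZ1 pDZ2 scalerBr opprD addrACA.
  have -> : a *: x + y - (a *: (x *m P) + y *m P) = a *: (x - x *m P) + (y - y *m P).
    by rewrite scalerBr opprD addrACA.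
  by rewrite pDZ1 pDZ2 scalerBr opprD addrACA.
- by move=> x y z; rewrite !pp_in H1 [p (p (z - _) _) _]H2.
- by move=> x y z; rewrite !pp_out H2.
- move=> x y; rewrite -Hbr (S3 x y) (S3 y x) (@L7 (x - x *m P) (y - y *m P)) ?LPz //.
  by rewrite /pp; apply: grp.
- move=> y; have [k Hk] := L5 (y *m P); exists k.+1 => x.
  have iterP : forall k x, iter k (right_mul pp y) x *m P = x *m P *m Rm (y *m P) ^+ k.
    elim=> [|j IH] z; first by rewrite expr0 mulmx1.
    by rewrite iterS /right_mul ppP -RmE IH exprSr -mulmxE mulmxA.
  rewrite iterS /right_mul; set w := iter k _ x.
  have wP : w *m P = 0 by rewrite /w iterP -mulmxA mulmxE Hk mulmx0.
  by rewrite /pp wP p01 p02 subr0.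
Qed.

End LR.

Lemma fitting (F : fieldType) (n' : nat) (T : 'M[F]_n'.+1) :
  exists t : 'M[F]_n'.+1 * 'M[F]_n'.+1 * nat,
    [/\ t.1.1 * t.1.1 = t.1.1,
        (forall S, T * S = S * T -> t.1.1 * S = S * t.1.1),
        t.1.1 * T ^+ t.2 = 0,
        1 - t.1.1 = t.1.2 * T & t.1.2 * t.1.1 = 0].
Proof.
have [m Hm] := multiplicity_XsubC (char_poly T) 0.
have [q Hr Hq] := Hm.
have nz : char_poly T != 0 by apply: monic_neq0; apply: char_poly_monic.
rewrite nz /= in Hr.
set X0 := 'X - 0%:P in Hq *.
have hX0 : horner_mx T X0 = T by rewrite /X0 polyC0 subr0 horner_mx_X.
have cop : coprimep q (X0 ^+ m.+1) by apply: coprimep_expr; rewrite coprimep_XsubC.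
have [[u v] /= Huv] := Bezout_eq1_coprimepP _ _ cop.
have CH := Cayley_Hamilton T.
set h := horner_mx T in hX0 CH *.
set P := h (u * q).
have E1 : 1 - P = h (v * X0 ^+ m) * T.
  rewrite -hX0 -rmorphM /= -mulrA -exprSr -[1](rmorph1 h) /P -rmorphB /=.
  by rewrite -Huv addrC addKr.
have E0 : P * (1 - P) = 0.
  rewrite E1 -hX0 /P -!rmorphM /=.
  have -> : u*q*(v*X0^+m*X0) = (u*v*X0)*(q*X0^+m).
    by rewrite -!mulrA; congr (_ * _); rewrite mulrCA; congr (_ * _); rewrite [RHS]mulrC -mulrA.
  by rewrite -Hq rmorphM /= -/h CH mulr0.
have PP : P * P = P by move: E0; rewrite mulrBr mulr1 => /eqP; rewrite subr_eq0 eq_sym => /eqP.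
exists (P, (1 - P) * h (v * X0 ^+ m), m.+1); split => /=.
- exact: PP.
- move=> S TS; rewrite /P /h; have := comm_horner_mx (u * q) (A:=T) (B:=S).
  by rewrite /comm_mx !mulmxE; apply.
- rewrite -hX0 -rmorphXn /P -rmorphM /=.
  have -> : u * q * X0 ^+ m.+1 = (u * X0) * (q * X0 ^+ m).
    by rewrite exprSr -!mulrA; congr (_ * _); rewrite [RHS]mulrC -mulrA.
  by rewrite -Hq rmorphM /= -/h CH mulr0.
- by rewrite -mulrA -E1 mulrBr mulr1 mulrBl mul1r PP subrr subr0.
- rewrite -mulrA; have /= -> := comm_horner_mx2 T (v * X0 ^+ m) (u * q).
  by rewrite mulrA mulrBl mul1r PP subrr mul0r.
Qed.

Theorem mainTheorem10 (F : fieldType) (n : nat)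
    (br : 'rV[F]_n -> 'rV[F]_n -> 'rV[F]_n) :
  [pchar F] =i pred0 ->
  is_lie_bracket br ->
  (exists p, is_LR_structure br p) ->
  exists p, is_LR_structure br p /\ complete_product p.
Proof.
move=> _ _ [p [[Hlin H1 H2] Hbr]].
case: n br p Hlin H1 H2 Hbr => [|n'] br p Hlin H1 H2 Hbr.
  exists p; split; first by split; [split|].
  by move=> x; exists 0%N => y; apply/rowP => -[].
have := fun j => fitting (T p j).
move=> /(@fin_all_exists _ (fun _ => ('M[F]_n'.+1 * 'M[F]_n'.+1 * nat)%type)) [f Hf].
apply: (@final F n' p Hlin H1 H2 (fun j => (f j).1.1) (fun j => (f j).1.2) (fun j => (f j).2)).
- by move=> j; case: (Hf j).
- by move=> j; case: (Hf j).
- by move=> j; case: (Hf j).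
- by move=> j; case: (Hf j).
- by move=> j; case: (Hf j).
- exact: Hbr.
Qed.
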